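(* Let $\mathcal I$ be a decreasing information set of length $n=2^m$ and let $M$ be an $m\times m$ upper-triangular binary matrix such that $\pi=\varphi(M)$ is an automorphism of $C(\mathcal I)$. For $i\in\{0,1\}$ let $\mathcal I_i=\mathcal I(\mathrm{Ind}_m(a_m=i))$ (an information set of length $2^{m-1}$), and let $\pi'=\varphi(M([1,m-1],[1,m-1]))$, a permutation of $\{0,\dots,2^{m-1}-1\}$. If $\pi$ commutes with $\mathrm{SC}_{\mathcal I}$, then $\pi'$ commutes with both $\mathrm{SC}_{\mathcal I_1}$ and $\mathrm{SC}_{\mathcal I_0}$.
   Context: Setup. Let $m\ge 1$, $n=2^m$. For any $k\ge1$, each index $z\in\{0,\dots,2^k-1\}$ is identified with the vector $a(z)=(a_1,\dots,a_k)^T\in\mathbb F_2^k$ determined by $z=\sum_{i=1}^k 2^{i-1}(1-a_i)$ (i.e. $a$ is the binary expansion of $2^k-1-z$, $a_1$ least significant), and with the monomial $x_1^{a_1}\cdots x_k^{a_k}$. Let $F=\begin{bmatrix}1&0\\1&1\end{bmatrix}$, $G_k=F^{\otimes k}$ with rows indexed $0,\dots,2^k-1$. For an information set $\mathcal I\subseteq\{0,\dots,2^k-1\}$ (equivalently a subset of $\mathbb F_2^k$), $C(\mathcal I)$ is the binary code spanned by the rows of $G_k$ with index in $\mathcal I$, and $\mathcal F$ is the complement of $\mathcal I$. Partial order on monomials: for monomials of equal degree, $x_{i_1}\cdots x_{i_t}\preccurlyeq x_{j_1}\cdots x_{j_t}$ (with $i_1<\dots<i_t$, $j_1<\dots<j_t$)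 iff $i_l\le j_l$ for all $l$; in general $f\preccurlyeq g$ iff $f\preccurlyeq g'$ for some divisor $g'$ of $g$ of the same degree as $f$. $\mathcal I$ is decreasing if $f\in\mathcal I$ and $g\preccurlyeq f$ imply $g\in\mathcal I$. A permutation $\pi$ of indices acts on vectors by $\pi(c)=(c_{\pi(0)},\dots,c_{\pi(N-1)})$; it is an automorphism of a code $C$ if $\pi(C)=C$. For $N\in GL_k(\mathbb F_2)$, $\varphi(N)$ is the permutation of $\{0,\dots,2^k-1\}$ sending $z$ to the index $z'$ with $a(z')=Na(z)$. A binary matrix $M$ is upper-triangular if $M(i,i)=1$ and $M(i,j)=0$ for $j<i$. $M([a,b],[c,d])$ is the submatrix with rows $a..b$ and columns $c..d$. SC decoding (length $2^k$). Let $f(x,y)=\log\frac{e^{x+y}+1}{e^x+e^y}$ and $g(u,x,y)=(-1)^ux+y$. The map $\mathrm{SC}_{\mathcal I}:\mathbb R^{2^k}\to\mathbb F_2^{2^k}$: given $y$ put $L_{i,k}=y_i$. For $0\le t<k$ and each $i$ with $\lfloor i/2^t\rfloor$ even: $L_{i,t}=f(L_{i,t+1},L_{i+2^t,t+1})$, $L_{i+2^t,t}=g(u_{i,t},L_{i,t+1},L_{i+2^t,t+1})$, $u_{i,t+1}=u_{i,t}\oplus u_{i+2^t,t}$, $u_{i+2^t,t+1}=u_{i+2^t,t}$. At stage $0$, $u_{i,0}=0$ if $i\in\mathcal F$ or $L_{i,0}\ge 0$, and $1$ otherwise. Quantities are computed in successive-cancellation order (stage-0 decisions for $i=0,1,\dots$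 in increasing order, each quantity computed once its inputs are available). The output is $(u_{i,k})_i$. A permutation $\pi$ commutes with $\mathrm{SC}_{\mathcal I}$ if $\mathrm{SC}_{\mathcal I}(\pi(y))=\pi(\mathrm{SC}_{\mathcal I}(y))$ for all $y$. Subcodes. For $i_1<\dots<i_t$ in $\{1,\dots,m\}$ and $c_{i_j}\in\mathbb F_2$, $\mathrm{Ind}_m(a_{i_1}=c_{i_1},\dots,a_{i_t}=c_{i_t})=\{a\in\mathbb F_2^m: a_{i_j}=c_{i_j}\ \forall j\}$. For such a set $A$, $\mathcal I(A)\subseteq\mathbb F_2^{m-t}$ is the set of vectors obtained from the elements of $\mathcal I\cap A$ by deleting coordinates $i_1,\dots,i_t$, regarded as an information set of length $2^{m-t}$. *)

(* Defs.v *)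
From Stdlib Require Import Reals.
From mathcomp Require Import all_boot all_algebra.
Set Implicit Arguments.
Unset Strict Implicit.
Unset Printing Implicit Defensive.

(* Vectors of length 2^k are represented as functions on nat; only the
   indices 0 .. 2^k-1 are meaningful. Information sets are boolean
   predicates on indices. *)

(* a_bit k z j = a_{j+1}(z): bit j (0-based, least significant first) of
   2^k - 1 - z. *)
Definition a_bit (k z j : nat) : bool := odd ((2 ^ k - 1 - z) %/ 2 ^ j).

Definition a_vec (k z : nat) : 'cV['F_2]_k :=
  \col_(j < k) (if a_bit k z j then (GRing.one _) else GRing.zero).

Definition idx (k : nat) (v : 'cV['F_2]_k) : nat :=
  \sum_(j < k) (if v j ord0 == GRing.zero then 2 ^ j else 0).

Definition phi (k : nat) (N : 'M['F_2]_k) (z : nat) : nat :=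
  idx (N *m a_vec k z).

Definition upper_tri (k : nat) (M : 'M['F_2]_k) : Prop :=
  (forall i : 'I_k, M i i = (GRing.one _)) /\
  (forall i j : 'I_k, (j < i)%N -> M i j = GRing.zero).

Definition topleft (k : nat) (M : 'M['F_2]_k.+1) : 'M['F_2]_k :=
  \matrix_(i < k, j < k) M (widen_ord (leqnSn k) i) (widen_ord (leqnSn k) j).

(* monomial of index z : the set of variables x_{j+1} with a_{j+1}(z) = 1 *)
Definition mono (k z : nat) : {set 'I_k} := [set j : 'I_k | a_bit k z j].

Definition slist (k : nat) (S : {set 'I_k}) : seq nat :=
  sort leq [seq nat_of_ord j | j <- enum S].

Definition mono_le_eq (k : nat) (S T : {set 'I_k}) : bool :=
  (#|S| == #|T|) &&
  all (fun l => nth 0 (slist S) l <= nth 0 (slist T) l) (iota 0 #|S|).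

Definition mono_le (k : nat) (S T : {set 'I_k}) : bool :=
  [exists T' : {set 'I_k}, (T' \subset T) && mono_le_eq S T'].

Definition info_set (k : nat) (Is : pred nat) : Prop :=
  forall z, Is z -> z < 2 ^ k.

Definition decreasing_info (k : nat) (Is : pred nat) : Prop :=
  forall z w, z < 2 ^ k -> w < 2 ^ k -> Is z ->
    mono_le (mono k w) (mono k z) -> Is w.

Definition Fker (r c : nat) : 'F_2 :=
  if (r == 0) && (c == 1) then GRing.zero else (GRing.one _).

(* G_k = F^{(x) k}, G_{k+1} = F (x) G_k (Kronecker product) *)
Fixpoint Gk (k : nat) : nat -> nat -> 'F_2 :=
  match k with
  | 0 => fun _ _ => (GRing.one _)
  | k'.+1 => fun r c =>
      GRing.mul (Fker (r %/ 2 ^ k') (c %/ 2 ^ k'))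
                (Gk k' (r %% 2 ^ k') (c %% 2 ^ k'))
  end.

Definition inC (k : nat) (Is : pred nat) (c : nat -> 'F_2) : Prop :=
  exists u : nat -> 'F_2,
    (forall r, r < 2 ^ k -> ~~ Is r -> u r = GRing.zero) /\
    (forall j, j < 2 ^ k ->
       c j = \big[GRing.add/GRing.zero]_(r < 2 ^ k) GRing.mul (u r) (Gk k r j)).

Definition is_aut (k : nat) (Is : pred nat) (pi : nat -> nat) : Prop :=
  (forall c, inC k Is c -> inC k Is (fun i => c (pi i))) /\
  (forall c, inC k Is c ->
     exists c', inC k Is c' /\ forall i, i < 2 ^ k -> c' (pi i) = c i).

Definition fSC (x y : R) : R :=
  ln (Rdiv (Rplus (exp (Rplus x y)) R1) (Rplus (exp x) (exp y))).

Definition gSC (u : bool) (x y : R) : R :=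
  Rplus (Rmult (pow (Ropp R1) (nat_of_bool u)) x) y.

(* Recursive form of the SC schedule: for length 2^(k'+1), stage k' pairs
   i and i + 2^k'; the first half of stage-0 decisions is an SC decoder of
   length 2^k' fed with L_{i,k'} = f(y_i, y_{i+h}), the second half one fed
   with L_{i+h,k'} = g(u_{i,k'}, y_i, y_{i+h}); finally
   u_{i,k'+1} = u_{i,k'} xor u_{i+h,k'} and u_{i+h,k'+1} = u_{i+h,k'}. *)
Fixpoint SC (k : nat) (Is : pred nat) (y : nat -> R) : nat -> bool :=
  match k with
  | 0 => fun _ => if Is 0 then (if Rle_dec R0 (y 0) then false else true)
                  else false
  | k'.+1 =>
      let h := 2 ^ k' in
      let ul := SC k' Is (fun i => fSC (y i) (y (i + h))) in
      let ur := SC k' (fun i => Is (i + h))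
                      (fun i => gSC (ul i) (y i) (y (i + h))) in
      fun i => if i < h then addb (ul i) (ur i) else ur (i - h)
  end.

Definition SC_commute (k : nat) (Is : pred nat) (pi : nat -> nat) : Prop :=
  forall (y : nat -> R) (i : nat), i < 2 ^ k ->
    SC k Is (fun j => y (pi j)) i = SC k Is y (pi i).

(* I(Ind_{k+1}(a_{k+1} = c)) as an information set of length 2^k *)
Definition subI (k : nat) (Is : pred nat) (c : bool) : pred nat :=
  fun z' => (z' < 2 ^ k) &&
    [exists z : 'I_(2 ^ k.+1),
       [&& Is z, a_bit k.+1 z k == c &
          [forall j : 'I_k, a_bit k.+1 z j == a_bit k z' j]]].

(* Main.v *)
Require Import Defs.
From Stdlib Require Import Reals Lra.
From mathcomp Require Import all_boot all_algebra.
From mathcomp Require Import zify.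

Local Open Scope R_scope.

Definition consR (b : bool) (x : R) : Prop := if b then x < 0 else 0 < x.

Lemma fSC_0l y : fSC 0 y = 0.
Proof.
unfold fSC. change R1 with 1. rewrite Rplus_0_l exp_0.
replace ((exp y + 1) / (1 + exp y)) with 1 by (field; generalize (exp_pos y); lra).
exact ln_1.
Qed.

Lemma fSC_0r x : fSC x 0 = 0.
Proof.
unfold fSC. change R1 with 1. rewrite Rplus_0_r exp_0.
replace ((exp x + 1) / (exp x + 1)) with 1 by (field; generalize (exp_pos x); lra).
exact ln_1.
Qed.

Lemma gSC_false x y : gSC false x y = x + y.
Proof. unfold gSC; simpl; change R1 with 1; ring. Qed.

Lemma f_cons b1 b2 x y : consR b1 x -> consR b2 y -> consR (addb b1 b2) (fSC x y).
Proof.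
unfold fSC. change R1 with 1. rewrite exp_plus.
set a := exp x. set c := exp y.
have ha : 0 < a by apply exp_pos.
have hc : 0 < c by apply exp_pos.
have key : forall r, 0 < r -> (r < 1 -> ln r < 0) /\ (1 < r -> 0 < ln r).
  move=> r hr; split=> h.
  - rewrite -ln_1; apply ln_increasing; lra.
  - rewrite -ln_1; apply ln_increasing; lra.
have hD : 0 < a + c by lra.
have hq : 0 < (a * c + 1) / (a + c) by apply Rdiv_lt_0_compat; nra.
have ltq : (a - 1) * (c - 1) < 0 -> (a * c + 1) / (a + c) < 1.
  move=> h; apply (Rmult_lt_reg_r (a + c)) => //.
  unfold Rdiv; rewrite Rmult_assoc Rinv_l; lra.
have gtq : 0 < (a - 1) * (c - 1) -> 1 < (a * c + 1) / (a + c).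
  move=> h; apply (Rmult_lt_reg_r (a + c)) => //.
  unfold Rdiv; rewrite Rmult_assoc Rinv_l; lra.
have [k1 k2] := key _ hq.
have ea : x < 0 -> a < 1 by move=> h; rewrite /a -exp_0; apply exp_increasing.
have eb : 0 < x -> 1 < a by move=> h; rewrite /a -exp_0; apply exp_increasing.
have ec : y < 0 -> c < 1 by move=> h; rewrite /c -exp_0; apply exp_increasing.
have ed : 0 < y -> 1 < c by move=> h; rewrite /c -exp_0; apply exp_increasing.
case: b1; case: b2 => /= h1 h2.
- apply k2, gtq. have := ea h1; have := ec h2; nra.
- apply k1, ltq. have := ea h1; have := ed h2; nra.
- apply k1, ltq. have := eb h1; have := ec h2; nra.
- apply k2, gtq. have := eb h1; have := ed h2; nra.
Qed.

Lemma g_cons a b x y : consR (addb a b) x -> consR b y -> consR b (gSC a x y).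
Proof.
unfold gSC; case: a; case: b => /= h1 h2; change R1 with 1; lra.
Qed.

Lemma f_solve T v : Rabs v < T ->
  fSC T (ln ((exp v * exp T - 1) / (exp T - exp v))) = v.
Proof.
move=> hT.
have h1 : v < T by move: hT; unfold Rabs; destruct (Rcase_abs v); lra.
have h2 : 0 < v + T by move: hT; unfold Rabs; destruct (Rcase_abs v); lra.
have e1 : exp v < exp T by apply exp_increasing.
have e2 : 1 < exp v * exp T by rewrite -exp_plus -exp_0; apply exp_increasing; lra.
set s := exp v in e1 e2 *. set E := exp T in e1 e2 *.
have hs : 0 < s by apply exp_pos.
have hq : 0 < (s * E - 1) / (E - s) by apply Rdiv_lt_0_compat; lra.
unfold fSC. change R1 with 1. rewrite exp_plus exp_ln //.
fold E.
replace ((E * ((s * E - 1) / (E - s)) + 1) / (E + (s * E - 1) / (E - s))) with s.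
  by rewrite /s ln_exp.
have hE : 0 < E by apply exp_pos.
field; split; [lra|].
have : 0 < E * (E - s) by apply Rmult_lt_0_compat; lra.
lra.
Qed.

Local Close Scope R_scope.

Lemma bit_hi k r x : x < k -> odd ((2 ^ k + r) %/ 2 ^ x) = odd (r %/ 2 ^ x).
Proof.
move=> hx.
have e : 2 ^ k = 2 ^ (k - x) * 2 ^ x by rewrite -expnD subnK // ltnW.
rewrite {1}e divnDl ?dvdn_mull // mulnK ?expn_gt0 // oddD oddX.
have -> : (k - x == 0) = false by apply/negbTE; rewrite subn_eq0 -ltnNge.
by [].
Qed.

Lemma bits_inj k : forall x x', x < 2 ^ k -> x' < 2 ^ k ->
  (forall j, j < k -> odd (x %/ 2 ^ j) = odd (x' %/ 2 ^ j)) -> x = x'.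
Proof.
elim: k => [|k IH] x x' hx hx' h.
  by move: hx hx'; rewrite expn0; lia.
have h0 := h 0 isT; rewrite expn0 !divn1 in h0.
have e : x %/ 2 = x' %/ 2.
  apply: IH.
  - by rewrite ltn_divLR // -expnSr.
  - by rewrite ltn_divLR // -expnSr.
  move=> j hj; have := h j.+1 hj.
  by rewrite expnS !divnMA.
by rewrite (divn_eq x 2) (divn_eq x' 2) e !modn2 h0.
Qed.

Lemma a_bit_lo k z j : z < 2 ^ k -> j < k -> a_bit k.+1 z j = a_bit k z j.
Proof.
move=> hz hj; rewrite /a_bit.
have -> : 2 ^ k.+1 - 1 - z = 2 ^ k + (2 ^ k - 1 - z).
  rewrite expnS; move: hz; set p := 2 ^ k; lia.
by rewrite bit_hi.
Qed.

Lemma a_bit_top k z : z < 2 ^ k -> a_bit k z k = false.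
Proof.
move=> hz; rewrite /a_bit divn_small //.
have : 0 < 2 ^ k by rewrite expn_gt0.
lia.
Qed.

Lemma a_bit_lo_top k z : z < 2 ^ k -> a_bit k.+1 z k = true.
Proof.
move=> hz; rewrite /a_bit.
have -> : 2 ^ k.+1 - 1 - z = 1 * 2 ^ k + (2 ^ k - 1 - z).
  rewrite expnS; move: hz; set p := 2 ^ k; lia.
rewrite divnMDl ?expn_gt0 // divn_small //.
have : 0 < 2 ^ k by rewrite expn_gt0.
lia.
Qed.

Lemma a_bit_hi k z j : z < 2 ^ k -> a_bit k.+1 (z + 2 ^ k) j = a_bit k z j.
Proof.
move=> hz; rewrite /a_bit.
have -> : 2 ^ k.+1 - 1 - (z + 2 ^ k) = 2 ^ k - 1 - z.
  rewrite expnS; move: hz; set p := 2 ^ k; lia.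
by [].
Qed.

Lemma ab_inj k z z' : z < 2 ^ k -> z' < 2 ^ k ->
  (forall j, j < k -> a_bit k z j = a_bit k z' j) -> z = z'.
Proof.
move=> hz hz' h.
have p0 : 0 < 2 ^ k by rewrite expn_gt0.
have : 2 ^ k - 1 - z = 2 ^ k - 1 - z'.
  apply: (@bits_inj k); try lia.
  exact: h.
lia.
Qed.

Lemma subI_true k Is i : i < 2 ^ k -> subI k Is true i = Is i.
Proof.
move=> hi; rewrite /subI hi /=.
apply/existsP/idP.
  case=> z /and3P [hz hk /forallP hj].
  have zlt : (z : nat) < 2 ^ k.
    case: (ltnP z (2 ^ k)) => // hge; exfalso.
    have zz : (z : nat) < 2 * 2 ^ k by rewrite -expnS.
    have e : (z : nat) = (z - 2 ^ k) + 2 ^ k by lia.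
    move: hk; rewrite e a_bit_hi ?a_bit_top //; lia.
  have e : (z : nat) = i.
    apply: (ab_inj _ _ _ zlt hi) => j hj'.
    have := eqP (hj (Ordinal hj')); rewrite /= a_bit_lo //.
  by rewrite -e.
move=> hIs.
have hi' : i < 2 ^ k.+1 by rewrite expnS; lia.
exists (Ordinal hi'); rewrite /= hIs a_bit_lo_top //=.
by apply/forallP => j; rewrite a_bit_lo.
Qed.

Lemma subI_false k Is i : i < 2 ^ k -> subI k Is false i = Is (i + 2 ^ k).
Proof.
move=> hi; rewrite /subI hi /=.
apply/existsP/idP.
  case=> z /and3P [hz hk /forallP hj].
  have zge : 2 ^ k <= z.
    case: (ltnP z (2 ^ k)) => // hlt; exfalso.
    by move: hk; rewrite a_bit_lo_top.
  have zz : (z : nat) < 2 * 2 ^ k by rewrite -expnS.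
  have e : (z : nat) = (z - 2 ^ k) + 2 ^ k by lia.
  have e2 : (z : nat) - 2 ^ k = i.
    have zl : (z : nat) - 2 ^ k < 2 ^ k by move: zz zge; set p := 2 ^ k; lia.
    apply: (ab_inj k _ _ zl hi) => j hj'.
    have := eqP (hj (Ordinal hj')); rewrite /= e a_bit_hi // addnK //.
  by rewrite -e2 -e.
move=> hIs.
have hi' : i + 2 ^ k < 2 ^ k.+1 by rewrite expnS; lia.
exists (Ordinal hi'); rewrite /= hIs a_bit_hi // a_bit_top //=.
by apply/forallP => j; rewrite a_bit_hi.
Qed.

Lemma dec_step k Is i : decreasing_info k.+1 Is -> i < 2 ^ k ->
  Is i -> Is (i + 2 ^ k).
Proof.
move=> hd hi hIs.
apply: (hd i) => //; first by rewrite expnS; lia.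
  by rewrite expnS; lia.
apply/existsP; exists (mono k.+1 (i + 2 ^ k)); apply/andP; split.
  apply/subsetP => x; rewrite !inE a_bit_hi //.
  have := ltn_ord x; rewrite ltnS leq_eqVlt => /orP [/eqP ->|hx].
    by rewrite a_bit_top.
  by rewrite a_bit_lo.
rewrite /mono_le_eq eqxx /=; apply/allP => l _; exact: leqnn.
Qed.
Import GRing.Theory.

Lemma sum_bound n (F : 'I_n -> nat) : (forall j : 'I_n, F j <= 2 ^ j) ->
  \sum_(j < n) F j < 2 ^ n.
Proof.
elim: n F => [|n IH] F hF; first by rewrite big_ord0 expn0.
rewrite big_ord_recr /= expnS mul2n -addnn.
have h1 := IH (fun j => F (widen_ord (leqnSn n) j)) (fun j => hF _).
have h2 := hF ord_max; rewrite /= in h2.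
move: h1 h2; set p := 2 ^ n; set s := \sum_(i < n) _; lia.
Qed.

Lemma idx_bound n (v : 'cV['F_2]_n) : idx v < 2 ^ n.
Proof. by apply: sum_bound => j; case: ifP. Qed.

Lemma phi_lo k (M : 'M['F_2]_k.+1) i : upper_tri M -> i < 2 ^ k -> phi M i < 2 ^ k.
Proof.
move=> [hd hu] hi; rewrite /phi /idx big_ord_recr /=.
have -> : (mulmx M (a_vec k.+1 i)) ord_max ord0 = GRing.one _.
  rewrite !mxE big_ord_recr /= big1 ?add0r.
    by rewrite hd !mxE /= a_bit_lo_top // mulr1.
  move=> l _; rewrite hu ?mul0r //=.
rewrite oner_eq0 addn0.
by apply: sum_bound => j; case: ifP.
Qed.

Lemma phi_hi k (M : 'M['F_2]_k.+1) i : upper_tri M -> i < 2 ^ k ->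
  phi M (i + 2 ^ k) = phi (topleft M) i + 2 ^ k.
Proof.
move=> [hd hu] hi; rewrite /phi /idx big_ord_recr /=.
have -> : (mulmx M (a_vec k.+1 (i + 2 ^ k))) ord_max ord0 = GRing.zero.
  rewrite !mxE big_ord_recr /= big1 ?add0r.
    by rewrite !mxE /= a_bit_hi // a_bit_top // mulr0.
  move=> l _; rewrite hu ?mul0r //=.
rewrite eqxx; congr (_ + _).
apply: eq_bigr => j _.
congr (if _ == _ then _ else _).
rewrite !mxE big_ord_recr /= !mxE /= a_bit_hi // a_bit_top // mulr0 addr0.
apply: eq_bigr => l _; rewrite !mxE /= a_bit_hi //.
Qed.

Lemma expS2 k : 2 ^ k.+1 = 2 ^ k + 2 ^ k.
Proof. by rewrite expnS mul2n addnn. Qed.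

Lemma SC_ext k : forall Is Js y y',
  (forall i, i < 2 ^ k -> Is i = Js i) ->
  (forall i, i < 2 ^ k -> y i = y' i) ->
  forall i, SC k Is y i = SC k Js y' i.
Proof.
elim: k => [|k IH] Is Js y y' hI hy i /=.
  by rewrite hI // hy.
have hk := expS2 k.
have hul : forall i, SC k Is (fun i => fSC (y i) (y (i + 2 ^ k))) i =
                     SC k Js (fun i => fSC (y' i) (y' (i + 2 ^ k))) i.
  apply: IH => j hj; first by apply: hI; lia.
  by rewrite !hy //; lia.
have hur : forall i,
  SC k (fun i => Is (i + 2 ^ k))
    (fun i => gSC (SC k Is (fun i => fSC (y i) (y (i + 2 ^ k))) i) (y i) (y (i + 2 ^ k))) i =
  SC k (fun i => Js (i + 2 ^ k))
    (fun i => gSC (SC k Js (fun i => fSC (y' i) (y' (i + 2 ^ k))) i) (y' i) (y' (i + 2 ^ k))) i.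
  apply: IH => j hj; first by apply: hI; lia.
  by rewrite hul !hy //; lia.
by rewrite hul !hur.
Qed.

Lemma SC_zero k : forall Is y, (forall i, i < 2 ^ k -> y i = R0) ->
  forall i, SC k Is y i = false.
Proof.
elim: k => [|k IH] Is y hy i /=.
  rewrite hy //; case: (Is 0) => //; case: Rle_dec => // h; exfalso; apply: h; apply: Rle_refl.
have hk := expS2 k.
have hul : forall i, SC k Is (fun i => fSC (y i) (y (i + 2 ^ k))) i = false.
  by apply: IH => j hj; rewrite hy ?fSC_0l //; lia.
have hur : forall i,
  SC k (fun i => Is (i + 2 ^ k))
    (fun i => gSC (SC k Is (fun i => fSC (y i) (y (i + 2 ^ k))) i) (y i) (y (i + 2 ^ k))) i = false.
  apply: IH => j hj; rewrite hul gSC_false !hy; try lia.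
  by rewrite Rplus_0_l.
by rewrite hul !hur; case: ifP.
Qed.

Lemma SC_strong k : forall (J1 J0 : pred nat) (v L : nat -> R),
  (forall i, i < 2 ^ k -> J1 i -> J0 i) ->
  (forall i, i < 2 ^ k -> consR (SC k J1 v i) (L i)) ->
  forall i, i < 2 ^ k -> SC k J0 L i = SC k J1 v i.
Proof.
elim: k => [|k IH] J1 J0 v L hJ hL i hi.
  have -> : i = 0 by move: hi; rewrite expn0; lia.
  have := hL 0 isT; rewrite /=.
  case e1: (J1 0).
    rewrite (hJ 0 isT e1).
    case: (Rle_dec R0 (v 0)) => _ /=; case: Rle_dec => //= h1 h2; lra.
  case: (J0 0) => //=; case: Rle_dec => //= h1 h2; lra.
have hk := expS2 k.
set a := SC k J1 (fun i => fSC (v i) (v (i + 2 ^ k))).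
set b := SC k (fun i => J1 (i + 2 ^ k)) (fun i => gSC (a i) (v i) (v (i + 2 ^ k))).
have hL1 : forall i, i < 2 ^ k -> consR (addb (a i) (b i)) (L i).
  move=> j hj; have := hL j ltac:(lia); rewrite /=.
  by rewrite -/a -/b hj.
have hL2 : forall i, i < 2 ^ k -> consR (b i) (L (i + 2 ^ k)).
  move=> j hj; have := hL (j + 2 ^ k) ltac:(lia); rewrite /=.
  rewrite -/a -/b. have -> : (j + 2 ^ k < 2 ^ k) = false by lia.
  by rewrite addnK.
have hul : forall i, i < 2 ^ k -> SC k J0 (fun i => fSC (L i) (L (i + 2 ^ k))) i = a i.
  apply: IH => [j hj|j hj]; first by apply: hJ; lia.
  rewrite -/a. have := f_cons _ _ _ _ (hL1 j hj) (hL2 j hj).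
  by rewrite -addbA addbb addbF.
have hur : forall i, i < 2 ^ k ->
  SC k (fun i => J0 (i + 2 ^ k))
    (fun i => gSC (SC k J0 (fun i => fSC (L i) (L (i + 2 ^ k))) i) (L i) (L (i + 2 ^ k))) i
  = b i.
  apply: IH => [j hj|j hj]; first by apply: hJ; lia.
  rewrite -/a -/b hul //. exact: g_cons _ _ _ _ (hL1 j hj) (hL2 j hj).
rewrite /= -/a -/b.
case: ifP => h.
  by rewrite hul // hur.
by rewrite hur //; lia.
Qed.

Fixpoint mxa (v : nat -> R) (n : nat) : R :=
  match n with 0 => R0 | n'.+1 => Rmax (mxa v n') (Rabs (v n')) end.

Lemma mxa_ge v n j : j < n -> Rle (Rabs (v j)) (mxa v n).
Proof.
elim: n => [|n IH] //= hj.
move: hj; rewrite ltnS leq_eqVlt => /orP [/eqP ->|hjn].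
  apply: Rmax_r.
apply: Rle_trans (IH hjn) _; apply: Rmax_l.
Qed.

Lemma SC_S k Is y i : SC k.+1 Is y i =
  let ul := SC k Is (fun j => fSC (y j) (y (j + 2 ^ k))) in
  let ur := SC k (fun j => Is (j + 2 ^ k)) (fun j => gSC (ul j) (y j) (y (j + 2 ^ k))) in
  if i < 2 ^ k then addb (ul i) (ur i) else ur (i - 2 ^ k).
Proof. by []. Qed.

Theorem lemma3 (k : nat) (Is : pred nat) (M : 'M['F_2]_k.+1) :
  info_set k.+1 Is ->
  decreasing_info k.+1 Is ->
  upper_tri M ->
  is_aut k.+1 Is (phi M) ->
  SC_commute k.+1 Is (phi M) ->
  SC_commute k (subI k Is true) (phi (topleft M)) /\
  SC_commute k (subI k Is false) (phi (topleft M)).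
Proof.
move=> _ hdec hM _ hcomm.
set pi := phi M. set pi' := phi (topleft M).
set h := 2 ^ k.
have hk : 2 ^ k.+1 = h + h by rewrite expnS mul2n addnn.
have P1 : forall i, i < h -> pi i < h by move=> i hi; apply: phi_lo.
have P2 : forall i, i < h -> pi (i + h) = pi' i + h by move=> i hi; apply: phi_hi.
have P3 : forall i, pi' i < h by move=> i; apply: idx_bound.
set Is0 := fun j => Is (j + h).
have inv : forall z i, i < h -> SC k Is0 z (pi i) = SC k Is0 z (pi' i).
  move=> z i hi.
  set y := fun j => if j < h then z j else R0.
  have A := hcomm y i ltac:(lia).
  have B := hcomm y (i + h) ltac:(lia).
  rewrite !SC_S /= -/h -/Is0 -/pi in A B.
  rewrite hi P1 // in A.
  rewrite P2 // (_ : i + h < h = false) ?addnK in B; last by lia.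
  rewrite (_ : pi' i + h < h = false) ?addnK in B; last by lia.
  have ul1 : forall j, SC k Is (fun j => fSC (y (pi j)) (y (pi (j + h)))) j = false.
    apply: SC_zero => j hj; rewrite /y P2 // (_ : pi' j + h < h = false) ?fSC_0r //; lia.
  have ul2 : forall j, SC k Is (fun j => fSC (y j) (y (j + h))) j = false.
    apply: SC_zero => j hj; rewrite /y (_ : j + h < h = false) ?fSC_0r //; lia.
  rewrite !ul1 !ul2 /= in A B.
  have e1 : forall j, SC k Is0 (fun j => gSC (SC k Is (fun j => fSC (y (pi j)) (y (pi (j + h)))) j) (y (pi j)) (y (pi (j + h)))) j
                    = SC k Is0 (fun j => z (pi j)) j.
    apply: SC_ext => // j hj.
    rewrite ?ul1 ?ul2 gSC_false /y P1 // P2 // (_ : pi' j + h < h = false) ?Rplus_0_r //; lia.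
  have e2 : forall j, SC k Is0 (fun j => gSC (SC k Is (fun j => fSC (y j) (y (j + h))) j) (y j) (y (j + h))) j = SC k Is0 z j.
    apply: SC_ext => // j hj.
    rewrite ?ul1 ?ul2 gSC_false /y hj (_ : j + h < h = false) ?Rplus_0_r //; lia.
  rewrite !e1 !e2 in A B.
  by rewrite -A B.
split.
-
  move=> v i hi.
  have ex : forall y, (forall j, j < h -> SC k (subI k Is true) y j = SC k Is y j).
    move=> y j hj; apply: SC_ext => // l hl; exact: subI_true.
  rewrite !ex //.
  set T := Rplus (mxa v h) R1.
  have hT : forall j, j < h -> Rlt (Rabs (v j)) T.
    move=> j hj; have := mxa_ge v _ _ hj; rewrite /T; lra.
  set w := fun j => ln (Rdiv (Rminus (Rmult (exp (v j)) (exp T)) 1) (Rminus (exp T) (exp (v j)))).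
  set y := fun j => if j < h then T else w (j - h).
  have A := hcomm y i ltac:(lia).
  have B := hcomm y (i + h) ltac:(lia).
  rewrite !SC_S /= -/h -/Is0 -/pi in A B.
  rewrite hi P1 // in A.
  rewrite P2 // (_ : i + h < h = false) ?addnK in B; last by lia.
  rewrite (_ : pi' i + h < h = false) ?addnK in B; last by lia.
  have ul1 : forall j, SC k Is (fun j => fSC (y (pi j)) (y (pi (j + h)))) j
                     = SC k Is (fun j => v (pi' j)) j.
    apply: SC_ext => // j hj.
    rewrite /y P1 // P2 // (_ : pi' j + h < h = false) ?addnK; last by lia.
    exact: f_solve _ _ (hT _ (P3 j)).
  have ul2 : forall j, SC k Is (fun j => fSC (y j) (y (j + h))) j = SC k Is v j.
    apply: SC_ext => // j hj.
    rewrite /y hj (_ : j + h < h = false) ?addnK; last by lia.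
    exact: f_solve _ _ (hT _ hj).
  rewrite !ul1 !ul2 in A B.
  rewrite B in A.
  rewrite inv // in A.
  set L := fun j => if SC k Is v j then Ropp R1 else R1.
  have hS : forall j, j < h -> SC k Is0 L j = SC k Is v j.
    apply: SC_strong.
      by move=> j hj; apply: dec_step.
    move=> j hj; rewrite /L /consR; case: (SC k Is v j); lra.
  have e : SC k Is v (pi i) = SC k Is v (pi' i).
    by rewrite -hS ?P1 // inv // hS.
  rewrite e in A.
  by move/(congr1 (addb^~ (SC k Is0 (fun j => gSC (SC k Is (fun j0 => fSC (y j0) (y (j0 + h))) j) (y j) (y (j + h))) (pi' i)))): A; rewrite -!addbA addbb !addbF.
-
  move=> v i hi.
  have ex : forall y, (forall j, j < h -> SC k (subI k Is false) y j = SC k Is0 y j).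
    move=> y j hj; apply: SC_ext => // l hl; exact: subI_false.
  rewrite !ex //.
  set y := fun j => if j < h then R0 else v (j - h).
  have B := hcomm y (i + h) ltac:(lia).
  rewrite !SC_S /= -/h -/Is0 -/pi in B.
  rewrite P2 // (_ : i + h < h = false) ?addnK in B; last by lia.
  rewrite (_ : pi' i + h < h = false) ?addnK in B; last by lia.
  have ul1 : forall j, SC k Is (fun j => fSC (y (pi j)) (y (pi (j + h)))) j = false.
    apply: SC_zero => j hj; rewrite /y P1 // fSC_0l //.
  have ul2 : forall j, SC k Is (fun j => fSC (y j) (y (j + h))) j = false.
    apply: SC_zero => j hj; rewrite /y hj fSC_0l //.
  have e1 : forall j, SC k Is0 (fun j => gSC (SC k Is (fun j => fSC (y (pi j)) (y (pi (j + h)))) j) (y (pi j)) (y (pi (j + h)))) j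
                    = SC k Is0 (fun j => v (pi' j)) j.
    apply: SC_ext => // j hj.
    rewrite ?ul1 ?ul2 gSC_false /y P1 // P2 // (_ : pi' j + h < h = false) ?addnK ?Rplus_0_l //; lia.
  have e2 : forall j, SC k Is0 (fun j => gSC (SC k Is (fun j => fSC (y j) (y (j + h))) j) (y j) (y (j + h))) j = SC k Is0 v j.
    apply: SC_ext => // j hj.
    rewrite ?ul1 ?ul2 gSC_false /y hj (_ : j + h < h = false) ?addnK ?Rplus_0_l //; lia.
  by rewrite !e1 !e2 in B.
Qed.
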